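(* Let $\mathcal T=\boxtimes ABCD$ be a (nondegenerate) tetrahedron. The following are equivalent: (1) $\mathcal T$ has an obtuse path; (2) there exists a point $O\in\operatorname{int}\mathcal T$ such that $(\mathcal T,O)$ is monostable; (3) for every face $F$ of $\mathcal T$ there exists a point $O_F\in\operatorname{int}\mathcal T$ such that $(\mathcal T,O_F)$ is monostable with its unique stable equilibrium on $F$.
   Context: A weighted polyhedron is a pair $(\mathcal P,O)$ with $\mathcal P$ a convex polyhedron and $O\in\operatorname{int}\mathcal P$ (thought of as the center of mass; no other restriction on $O$). $(\mathcal P,O)$ is in equilibrium on a face, edge or vertex $X$ if there exists $Q$ in the relative interior of $X$ (a vertex is its own relative interior) such that the plane perpendicular to the segment $[O,Q]$ at $Q$ supports $\mathcal P$. The equilibrium is stable if $X$ is a face, unstable if $X$ is a vertex. $(\mathcal P,O)$ is monostable if it has exactly one stable equilibrium (exactly one face carries an equilibrium). A tetrahedron has an obtuse path if, for some labelling $A,B,C,D$ of its vertices, the three edges $\overline{AB},\overline{BC},\overline{CD}$ all have obtuse dihedral angles (i.e. three edges with obtuse dihedral angles having no common vertex). *)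

(* Defs.v *)
From HB Require Import structures.
From mathcomp Require Import all_boot all_order all_algebra.
From mathcomp Require Import reals trigo.
Set Implicit Arguments. Unset Strict Implicit. Unset Printing Implicit Defensive.
Import Order.TTheory GRing.Theory Num.Theory.
Local Open Scope ring_scope.

Section Defs.
Variable R : realType.
Local Notation pt := 'rV[R]_3.

Definition dot (u v : pt) : R := (u *m v^T) 0 0.
Definition vnorm (u : pt) : R := Num.sqrt (dot u u).

Definition tetra_nondegenerate (V : 'I_4 -> pt) : Prop :=
  \det (\matrix_(i < 3, j < 3) (V (lift ord0 i) - V ord0) 0 j) != 0.

Definition in_tetra (V : 'I_4 -> pt) (P : pt) : Prop :=
  exists w : 'I_4 -> R, (forall i, 0 <= w i) /\ \sum_i w i = 1 /\
    P = \sum_i w i *: V i.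

Definition in_interior (V : 'I_4 -> pt) (P : pt) : Prop :=
  exists w : 'I_4 -> R, (forall i, 0 < w i) /\ \sum_i w i = 1 /\
    P = \sum_i w i *: V i.

(* The faces of the tetrahedron are indexed by the opposite vertex f;
   P belongs to the relative interior of the face opposite to f. *)
Definition in_face_relint (V : 'I_4 -> pt) (f : 'I_4) (P : pt) : Prop :=
  exists w : 'I_4 -> R, (forall i, i != f -> 0 < w i) /\ w f = 0 /\
    \sum_i w i = 1 /\ P = \sum_i w i *: V i.

Definition perp_plane_supports (V : 'I_4 -> pt) (O Q : pt) : Prop :=
  O != Q /\ in_tetra V Q /\
  ((forall P, in_tetra V P -> dot (P - Q) (Q - O) <= 0) \/
   (forall P, in_tetra V P -> 0 <= dot (P - Q) (Q - O))).

(* (T, O) is in (stable) equilibrium on the face opposite to f *)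
Definition equilibrium_on_face (V : 'I_4 -> pt) (O : pt) (f : 'I_4) : Prop :=
  exists Q, in_face_relint V f Q /\ perp_plane_supports V O Q.

Definition monostable_on (V : 'I_4 -> pt) (O : pt) (f : 'I_4) : Prop :=
  forall g, equilibrium_on_face V O g <-> g = f.

Definition monostable (V : 'I_4 -> pt) (O : pt) : Prop :=
  exists f, monostable_on V O f.

Definition perp_comp (e u : pt) : pt := u - (dot u e / dot e e) *: e.

Definition dihedral_angle (V : 'I_4 -> pt) (a b c d : 'I_4) : R :=
  let e := V b - V a in
  let u := perp_comp e (V c - V a) in
  let v := perp_comp e (V d - V a) in
  acos (dot u v / (vnorm u * vnorm v)).

Definition obtuse_edge (V : 'I_4 -> pt) (a b c d : 'I_4) : Prop :=
  pi / 2 < dihedral_angle V a b c d.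

(* labelling A,B,C,D = V a, V b, V c, V d with AB, BC, CD obtuse *)
Definition has_obtuse_path (V : 'I_4 -> pt) : Prop :=
  exists a b c d : 'I_4, uniq [:: a; b; c; d] /\
    obtuse_edge V a b c d /\ obtuse_edge V b c a d /\ obtuse_edge V c d a b.

End Defs.

(* Main.v *)
Require Import Defs.
From HB Require Import structures.
From mathcomp Require Import all_boot all_order all_algebra.
From mathcomp Require Import reals trigo.
From mathcomp Require Import ring lra.
Set Implicit Arguments. Unset Strict Implicit. Unset Printing Implicit Defensive.
Import Order.TTheory GRing.Theory Num.Theory.
Local Open Scope ring_scope.

Section Dot.
Variable R : realType.
Implicit Types u v w : 'rV[R]_3.

Lemma dotE u v : dot u v = \sum_j u 0 j * v 0 j.
Proof. by rewrite /dot !mxE; apply: eq_bigr => j _; rewrite mxE. Qed.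

Lemma dotC u v : dot u v = dot v u.
Proof. by rewrite !dotE; apply: eq_bigr => j _; rewrite mulrC. Qed.

Lemma dotDl u v w : dot (u + v) w = dot u w + dot v w.
Proof. by rewrite !dotE -big_split; apply: eq_bigr => j _; rewrite mxE mulrDl. Qed.

Lemma dotZl a u v : dot (a *: u) v = a * dot u v.
Proof. by rewrite !dotE mulr_sumr; apply: eq_bigr => j _; rewrite mxE mulrA. Qed.

Lemma dotNl u v : dot (- u) v = - dot u v.
Proof. by rewrite -scaleN1r dotZl mulN1r. Qed.

Lemma dotBl u v w : dot (u - v) w = dot u w - dot v w.
Proof. by rewrite dotDl dotNl. Qed.

Lemma dot0l v : dot 0 v = 0.
Proof. by rewrite dotE big1 // => j _; rewrite mxE mul0r. Qed.

Lemma dotDr u v w : dot w (u + v) = dot w u + dot w v.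
Proof. by rewrite !(dotC w) dotDl. Qed.
Lemma dotZr a u v : dot v (a *: u) = a * dot v u.
Proof. by rewrite !(dotC v) dotZl. Qed.
Lemma dotNr u v : dot v (- u) = - dot v u.
Proof. by rewrite !(dotC v) dotNl. Qed.
Lemma dotBr u v w : dot w (u - v) = dot w u - dot w v.
Proof. by rewrite !(dotC w) dotBl. Qed.
Lemma dot0r v : dot v 0 = 0.
Proof. by rewrite dotC dot0l. Qed.

Lemma dot_suml (I : Type) (r : seq I) (P : pred I) (F : I -> 'rV[R]_3) v :
  dot (\sum_(i <- r | P i) F i) v = \sum_(i <- r | P i) dot (F i) v.
Proof. exact: (big_morph (fun x => dot x v) (fun x y => dotDl x y v) (dot0l v)). Qed.

Lemma dot_sumr (I : Type) (r : seq I) (P : pred I) (F : I -> 'rV[R]_3) v :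
  dot v (\sum_(i <- r | P i) F i) = \sum_(i <- r | P i) dot v (F i).
Proof. rewrite dotC dot_suml; apply: eq_bigr => i _; exact: dotC. Qed.

Lemma dotxx_ge0 u : 0 <= dot u u.
Proof. by rewrite dotE sumr_ge0 // => j _; rewrite -expr2 sqr_ge0. Qed.

Lemma dotxx_eq0 u : dot u u = 0 -> u = 0.
Proof.
rewrite dotE => /eqP; rewrite psumr_eq0 => [/allP H|j _]; last by rewrite -expr2 sqr_ge0.
apply/rowP => j; rewrite !mxE; have := H j (mem_index_enum j).
by rewrite /= mulf_eq0 orbb => /eqP.
Qed.

Lemma dotxx_gt0 u : u != 0 -> 0 < dot u u.
Proof.
move=> u0; rewrite lt_neqAle dotxx_ge0 andbT eq_sym; apply/eqP => /dotxx_eq0 h.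
by rewrite h eqxx in u0.
Qed.

End Dot.


Section Tetra.
Variables (R : realType) (V : 'I_4 -> 'rV[R]_3).
Hypothesis nd : tetra_nondegenerate V.

Definition Mt := \matrix_(i < 3, j < 3) (V (lift ord0 i) - V ord0) 0 j.
Definition gg (k : 'I_3) : 'rV[R]_3 := (col k (invmx Mt))^T.
Definition g (i : 'I_4) : 'rV[R]_3 :=
  if unlift ord0 i is Some k then gg k else - \sum_k gg k.

Lemma Mt_unit : Mt \in unitmx.
Proof. by rewrite unitmxE unitfE. Qed.

Lemma dot_gg (i k : 'I_3) : dot (V (lift ord0 i) - V ord0) (gg k) = (i == k)%:R.
Proof.
have := congr1 (fun A : 'M[R]_3 => A i k) (mulmxV Mt_unit); rewrite !mxE => <-.
rewrite dotE; apply: eq_bigr => j _; rewrite !mxE //.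
Qed.

Lemma sum_delta (i : 'I_3) : \sum_k (i == k)%:R = 1 :> R.
Proof.
rewrite (bigD1 i) //= eqxx big1 ?addr0 // => k /negPf; rewrite eq_sym => ->.
by [].
Qed.

Lemma dotVg0 (i j : 'I_4) : dot (V i - V ord0) (g j) = (i == j)%:R - (ord0 == j)%:R.
Proof.
case: (unliftP ord0 i) => [i'|] ->; last by rewrite subrr dot0l subrr.
case: (unliftP ord0 j) => [j'|] ->; rewrite /g ?liftK ?unlift_none.
  by rewrite dot_gg (inj_eq lift_inj) (negPf (neq_lift _ _)) subr0.
by rewrite dotNr dot_sumr (eq_bigr _ (fun k _ => dot_gg i' k)) sum_delta eqxx
  eq_sym (negPf (neq_lift _ _)) sub0r.
Qed.

Lemma dotVg (a b j : 'I_4) : dot (V a - V b) (g j) = (a == j)%:R - (b == j)%:R.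
Proof.
have -> : V a - V b = (V a - V ord0) - (V b - V ord0) by rewrite opprB addrA subrK.
by rewrite dotBl !dotVg0 opprB addrA subrK.
Qed.

Lemma sum_g : \sum_i g i = 0.
Proof.
rewrite big_ord_recl /g unlift_none.
by under [X in _ + X]eq_bigr => k _ do rewrite liftK; rewrite addNr.
Qed.

Lemma rec1_0 (x : 'rV[R]_3) :
  x = \sum_(k < 3) dot x (gg k) *: (V (lift ord0 k) - V ord0).
Proof.
rewrite -{1}[x](mulmxKV Mt_unit) mulmx_sum_row; apply: eq_bigr => k _.
congr (_ *: _).
  by rewrite dotE mxE; apply: eq_bigr => j _; rewrite !mxE.
by apply/rowP => j; rewrite !mxE.
Qed.

Lemma rec1 (x : 'rV[R]_3) (a : 'I_4) :
  x = \sum_i dot x (g i) *: (V i - V a).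
Proof.
have -> : \sum_i dot x (g i) *: (V i - V a) =
   \sum_i dot x (g i) *: (V i - V ord0) + \sum_i dot x (g i) *: (V ord0 - V a).
  rewrite -big_split; apply: eq_bigr => i _ /=.
  by rewrite -scalerDr addrA subrK.
rewrite -scaler_suml -dot_sumr sum_g dot0r scale0r addr0.
rewrite big_ord_recl subrr scaler0 add0r {1}[x]rec1_0.
by apply: eq_bigr => k _; rewrite /g liftK.
Qed.

Lemma rec2_0 (x : 'rV[R]_3) :
  x = \sum_(k < 3) dot x (V (lift ord0 k) - V ord0) *: gg k.
Proof.
have H : x *m Mt^T *m (invmx Mt)^T = x.
  by rewrite -mulmxA -trmx_mul mulVmx ?Mt_unit // trmx1 mulmx1.
rewrite -{1}H mulmx_sum_row; apply: eq_bigr => k _.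
congr (_ *: _).
  by rewrite dotE mxE; apply: eq_bigr => j _; rewrite !mxE.
by rewrite /gg tr_col.
Qed.

Lemma rec2 (x : 'rV[R]_3) (a : 'I_4) :
  x = \sum_i dot x (V i - V a) *: g i.
Proof.
have -> : \sum_i dot x (V i - V a) *: g i =
   \sum_i dot x (V i - V ord0) *: g i + \sum_i dot x (V ord0 - V a) *: g i.
  rewrite -big_split; apply: eq_bigr => i _ /=.
  by rewrite -scalerDl -dotDr addrA subrK.
rewrite -scaler_sumr sum_g scaler0 addr0.
rewrite big_ord_recl subrr dot0r scale0r add0r {1}[x]rec2_0.
by apply: eq_bigr => k _; rewrite /g liftK.
Qed.

End Tetra.


Section I4.
Lemma cover4 (a b c d x : 'I_4) : uniq [:: a; b; c; d] -> x \in [:: a; b; c; d].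
Proof.
move=> /card_uniqP Hc.
have H4 : #|[:: a; b; c; d]| = #|'I_4| by rewrite Hc card_ord.
have : [:: a; b; c; d] \subset 'I_4 by apply/subsetP.
by move/(subset_cardP H4) => ->.
Qed.

Lemma ext4 (s : seq 'I_4) : (size s < 4)%N -> exists d, d \notin s.
Proof.
move=> hs; apply/existsP; rewrite -negb_forall; apply/negP => /forallP H.
have : 'I_4 \subset s by apply/subsetP => x _; exact: H.
move/subset_leq_card; rewrite card_ord => h.
have := leq_trans h (card_size s); rewrite leqNgt hs.
by [].
Qed.

Lemma sum4 (T : nmodType) (F : 'I_4 -> T) (a b c d : 'I_4) :
  uniq [:: a; b; c; d] -> \sum_i F i = F a + F b + F c + F d.
Proof.
move=> u; have -> : \sum_i F i = \sum_(i <- [:: a; b; c; d]) F i.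
  rewrite [RHS]big_uniq //; apply: eq_bigl => x /=; by rewrite cover4.
by rewrite !big_cons big_nil addr0 !addrA.
Qed.
End I4.

Section Tetra2.
Variables (R : realType) (V : 'I_4 -> 'rV[R]_3).
Hypothesis nd : tetra_nondegenerate V.

Local Notation g := (g V).
Definition G (i j : 'I_4) : R := dot (g i) (g j).
Definition lam (P : 'rV[R]_3) (i : 'I_4) : R := dot (P - V ord0) (g i) + (ord0 == i)%:R.

Lemma G_sym i j : G i j = G j i.
Proof. exact: dotC. Qed.

Lemma g_neq0 i : g i != 0.
Proof.
have [b hb] := @ext4 [:: i] isT.
apply/eqP => h; have := dotVg nd i b i.
rewrite h dot0r eqxx; move: hb; rewrite inE => /negPf ->; rewrite subr0.
by move/eqP; rewrite eq_sym oner_eq0.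
Qed.

Lemma G_gt0 i : 0 < G i i.
Proof. exact: dotxx_gt0 (g_neq0 i). Qed.

Lemma G_row i : \sum_j G i j = 0.
Proof. by rewrite /G -dot_sumr sum_g ?dot0r. Qed.

Lemma G_cs i j : i != j -> G i j ^+ 2 < G i i * G j j.
Proof.
move=> ij.
have [m hm] := @ext4 [:: i; j] isT.
set z := G j j *: g i - G i j *: g j.
have hz : dot z (V i - V m) = G j j.
  rewrite /z dotBl !dotZl !(dotC (g _)) !(dotVg nd) eqxx (negPf ij).
  move: hm; rewrite !inE negb_or => /andP[/negPf hmi /negPf hmj].
  by rewrite hmi hmj !subr0 mulr1 mulr0 subr0.
have z0 : z != 0.
  apply/eqP => h; move: hz; rewrite h dot0l => /esym/eqP.
  by rewrite (gt_eqF (G_gt0 j)).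
have := dotxx_gt0 z0.
have -> : dot z z = G j j * (G i i * G j j - G i j ^+ 2).
  rewrite /z !(dotBl, dotBr, dotZl, dotZr) -/(G i i) -/(G j j) -/(G i j).
  rewrite (dotC (g j) (g i)) -/(G i j); ring.
rewrite pmulr_rgt0 ?G_gt0 // subr_gt0 => //.
Qed.

Lemma lam_bary (w : 'I_4 -> R) i :
  \sum_k w k = 1 -> lam (\sum_k w k *: V k) i = w i.
Proof.
move=> sw; rewrite /lam.
have -> : \sum_k w k *: V k - V ord0 = \sum_k w k *: (V k - V ord0).
  rewrite [RHS](eq_bigr (fun k => w k *: V k - w k *: V ord0)); last first.
    by move=> k _; rewrite scalerBr.
  by rewrite sumrB -scaler_suml sw scale1r.
rewrite dot_suml (eq_bigr (fun k => w k * ((k == i)%:R - (ord0 == i)%:R))); last first.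
  by move=> k _; rewrite dotZl dotVg0.
rewrite (eq_bigr (fun k => w k * (k == i)%:R - w k * (ord0 == i)%:R)); last first.
  by move=> k _; rewrite mulrBr.
rewrite sumrB -mulr_suml sw mul1r subrK.
rewrite (bigD1 i) //= eqxx mulr1 big1 ?addr0 // => k /negPf ->.
by rewrite mulr0.
Qed.

Lemma lam_sum P : \sum_i lam P i = 1.
Proof.
rewrite /lam big_split /= -dot_sumr sum_g dot0r add0r.
rewrite (bigD1 ord0) //= big1 ?addr0 // => k; rewrite eq_sym => /negPf ->.
by [].
Qed.

Lemma lam_rec P : P = \sum_i lam P i *: V i.
Proof.
have E : \sum_i lam P i *: V i - V ord0 = \sum_i lam P i *: (V i - V ord0).
  rewrite [RHS](eq_bigr (fun k => lam P k *: V k - lam P k *: V ord0)); last first.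
    by move=> k _; rewrite scalerBr.
  by rewrite sumrB -scaler_suml lam_sum scale1r.
rewrite -[RHS](subrK (V ord0)) E.
have -> : \sum_i lam P i *: (V i - V ord0) = \sum_i dot (P - V ord0) (g i) *: (V i - V ord0).
  rewrite big_ord_recl [X in _ = X]big_ord_recl !subrr !scaler0 !add0r.
  apply: eq_bigr => k _; rewrite /lam (negPf (neq_lift _ _)) addr0 //.
by rewrite -(rec1 nd) subrK.
Qed.

Lemma lam_lin P (t : R) (y : 'rV[R]_3) i : lam (P + t *: y) i = lam P i + t * dot y (g i).
Proof. by rewrite /lam (addrAC P) (dotDl (P - V ord0)) dotZl (addrAC (dot _ _)). Qed.

Lemma lam_diff P Q i : lam P i - lam Q i = dot (P - Q) (g i).
Proof.
rewrite /lam opprD addrACA subrr addr0 -dotBl; congr dot.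
by rewrite opprB addrA subrK.
Qed.

End Tetra2.


Section Equil.
Variables (R : realType) (V : 'I_4 -> 'rV[R]_3).
Hypothesis nd : tetra_nondegenerate V.

Local Notation g := (g V).
Local Notation G := (G V).
Local Notation lam := (lam V).

Lemma delta_sum (k : 'I_4) : \sum_l (l == k)%:R = 1 :> R.
Proof.
rewrite (bigD1 k) //= eqxx big1 ?addr0 // => l /negPf -> //.
Qed.

Lemma V_tetra k : in_tetra V (V k).
Proof.
exists (fun l => (l == k)%:R); split; first by move=> l; rewrite ler0n.
split; first exact: delta_sum.
rewrite (bigD1 k) //= eqxx scale1r big1 ?addr0 // => l /negPf ->.
by rewrite scale0r.
Qed.

Lemma equilE O (w : 'I_4 -> R) : (forall i, 0 < w i) -> \sum_i w i = 1 ->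
  O = \sum_i w i *: V i -> forall i,
  equilibrium_on_face V O i <-> (forall j, j != i -> w i * G i j < w j * G i i).
Proof.
move=> wp sw hO i.
have lO : forall j, lam O j = w j by move=> j; rewrite hO lam_bary.
have tO : in_tetra V O by exists w; split => // l; exact: ltW.
split.
- case=> Q [[q [qp [qi [sq hQ]]]] [OQ [tQ sup]]].
  have lQ : forall j, lam Q j = q j by move=> j; rewrite hQ lam_bary.
  set x := Q - O.
  have x0 : x != 0 by rewrite subr_eq0 eq_sym.
  case: sup => [H|H]; last first.
    have := H O tO; rewrite -opprB dotNl -/x oppr_ge0 => h.
    have : dot x x = 0 by apply/eqP; rewrite eq_le h dotxx_ge0.
    by move/dotxx_eq0/eqP; rewrite (negPf x0).
  have HV : forall k, dot (V k - Q) x <= 0 by move=> k; apply: H; exact: V_tetra.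
  have HS : \sum_k q k * dot (V k - Q) x = 0.
    rewrite (eq_bigr (fun k => dot (q k *: (V k - Q)) x)); last by move=> k _; rewrite dotZl.
    rewrite -dot_suml.
    have -> : \sum_k q k *: (V k - Q) = 0.
      rewrite (eq_bigr (fun k => q k *: V k - q k *: Q)); last by move=> k _; rewrite scalerBr.
      by rewrite sumrB -scaler_suml sq scale1r -hQ subrr.
    by rewrite dot0l.
  have qge : forall k, 0 <= q k.
    by move=> k; case: (eqVneq k i) => [->|ki]; [rewrite qi | exact: ltW (qp k ki)].
  have HZ : forall k, k != i -> dot (V k - Q) x = 0.
    move=> k ki.
    have HS' : \sum_k (- (q k * dot (V k - Q) x)) = 0 by rewrite sumrN HS oppr0.
    move/eqP: HS'; rewrite psumr_eq0; last first.
      by move=> l _; rewrite oppr_ge0 mulr_ge0_le0.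
    move/allP => /(_ k (mem_index_enum k)) /=; rewrite oppr_eq0 mulf_eq0.
    by rewrite (gt_eqF (qp k ki)) /= => /eqP.
  have [a ha] := @ext4 [:: i] isT.
  have ai : a != i by move: ha; rewrite inE.
  have dxa : forall k, k != i -> dot x (V k - V a) = 0.
    move=> k ki.
    have -> : V k - V a = (V k - Q) - (V a - Q) by rewrite opprB addrA subrK.
    by rewrite dotC dotBl !HZ // subrr.
  set t := dot x (V i - V a).
  have xe : x = t *: g i.
    rewrite {1}(rec2 nd x a) (bigD1 i) //= big1 ?addr0 // => k ki.
    by rewrite dxa // scale0r.
  have tle : t <= 0.
    have -> : t = dot (V i - Q) x.
      rewrite /t.
      have -> : V i - V a = (V i - Q) - (V a - Q) by rewrite opprB addrA subrK.
      by rewrite dotC dotBl (HZ a ai) subr0.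
    exact: HV.
  have hQO : Q = O + t *: g i by rewrite -xe /x addrC subrK.
  have qj : forall j, q j = w j + t * G i j.
    by move=> j; rewrite -lQ hQO lam_lin lO.
  move=> j ji.
  have h0 := qi; rewrite qj in h0.
  have hj := qp j ji; rewrite qj in hj.
  have Gi := G_gt0 nd i.
  have -> : w i = - (t * G i i) by apply/eqP; rewrite -addr_eq0 h0.
  rewrite -subr_gt0.
  have -> : w j * G i i - - (t * G i i) * G i j = G i i * (w j + t * G i j) by ring.
  exact: mulr_gt0.
- move=> HE.
  have Gi := G_gt0 nd i.
  set t := - (w i / G i i).
  set Q := O + t *: g i.
  have lQ : forall j, lam Q j = w j + t * G i j.
    by move=> j; rewrite /Q lam_lin lO.
  have lQi : lam Q i = 0.
    by rewrite lQ /t mulNr -mulrA mulVf ?mulr1 ?subrr // gt_eqF.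
  have lQp : forall j, j != i -> 0 < lam Q j.
    move=> j ji; rewrite lQ /t.
    have -> : w j + - (w i / G i i) * G i j = (w j * G i i - w i * G i j) / G i i.
      by field; rewrite gt_eqF.
    by rewrite divr_gt0 // subr_gt0 HE.
  have lQge : forall j, 0 <= lam Q j.
    by move=> j; case: (eqVneq j i) => [->|ji]; [rewrite lQi | exact: ltW (lQp j ji)].
  have t0 : t < 0 by rewrite /t oppr_lt0 divr_gt0.
  have QO : Q - O = t *: g i by rewrite /Q addrC addKr.
  exists Q; split.
    exists (lam Q); split => //; split => //; split; [exact: lam_sum | exact: lam_rec].
  split.
    apply/eqP => h; have : t *: g i = 0 by rewrite -QO h subrr.
    move/eqP; rewrite scaler_eq0 (lt_eqF t0) /= => /eqP hg.
    by move: (g_neq0 nd i); rewrite hg eqxx.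
  split.
    exists (lam Q); split => //; split; [exact: lam_sum | exact: lam_rec].
  left => P [p [pp [sp hP]]].
  rewrite QO.
  rewrite dotZr -lam_diff lQi subr0 hP lam_bary //.
  by rewrite mulr_le0_ge0 // ltW.
Qed.

End Equil.


Lemma uniq4P (a b c d : 'I_4) : uniq [:: a; b; c; d] -> (a != b) /\ (a != c) /\ (a != d) /\ (b != c) /\ (b != d) /\ (c != d).
Proof.
rewrite /= !inE !negb_or.
by case/and4P => /and3P[-> -> ->] /andP[-> ->] ->.
Qed.
Lemma uniq4I (a b c d : 'I_4) : (a != b) /\ (a != c) /\ (a != d) /\ (b != c) /\ (b != d) /\ (c != d) -> uniq [:: a; b; c; d].
Proof.
by case=> ab [ac [ad [bc [bd cd]]]]; rewrite /= !inE !negb_or ab ac ad bc bd cd.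
Qed.

Section CS.
Variable R : realType.
Lemma cs (u v : 'rV[R]_3) : dot u v ^+ 2 <= dot u u * dot v v.
Proof.
have [v0|v0] := eqVneq v 0; first by rewrite v0 !dot0r expr0n /= mulr0.
have hv := dotxx_gt0 v0.
set z := dot v v *: u - dot u v *: v.
have := dotxx_ge0 z.
have -> : dot z z = dot v v * (dot u u * dot v v - dot u v ^+ 2).
  rewrite /z !(dotBl, dotBr, dotZl, dotZr) (dotC v u); ring.
by rewrite pmulr_rge0 // subr_ge0.
Qed.

Lemma acos_gt_pihalf (t : R) : -1 <= t <= 1 -> (pi / 2 < acos t) = (t < 0).
Proof.
move=> ht.
have h1 : acos t \in `[0, pi] by rewrite in_itv /= acos_ge0 ?acos_lepi.
have h2 : pi / 2 \in `[0, (pi : R)].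
  have := pi_gt0 R => hp.
  rewrite in_itv /= divr_ge0 ?ltW //=; lra.
rewrite -(ltr_cos h2 h1) acosK ?cos_pihalf //.
Qed.
End CS.

Section Obtuse.
Variables (R : realType) (V : 'I_4 -> 'rV[R]_3).
Hypothesis nd : tetra_nondegenerate V.

Local Notation g := (g V).
Local Notation G := (G V).

Lemma obtuseE a b c d : uniq [:: a; b; c; d] ->
  (obtuse_edge V a b c d <-> 0 < G c d).
Proof.
move=> uq; have [ab [ac [ad [bc [bd cd]]]]] := uniq4P uq.
rewrite /obtuse_edge /dihedral_angle /perp_comp /vnorm.
set e := V b - V a.
set yc := V c - V a.
set yd := V d - V a.
have dvg : forall x y z, dot (V x - V y) (g z) = (x == z)%:R - (y == z)%:R := dotVg nd.
have ec : dot e (g c) = 0 by rewrite dvg (negPf bc) (negPf ac) subrr.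
have ed : dot e (g d) = 0 by rewrite dvg (negPf bd) (negPf ad) subrr.
have eb : dot e (g b) = 1 by rewrite dvg eqxx (negPf ab) subr0.
have e0 : e != 0 by apply/eqP => h; move: eb; rewrite h dot0l => /eqP; rewrite eq_sym oner_eq0.
have ee := dotxx_gt0 e0.
have ycc : dot yc (g c) = 1 by rewrite dvg eqxx (negPf ac) subr0.
have ycd : dot yc (g d) = 0 by rewrite dvg (negPf cd) (negPf ad) subrr.
have ydc : dot yd (g c) = 0 by rewrite dvg eq_sym (negPf cd) (negPf ac) subrr.
have ydd : dot yd (g d) = 1 by rewrite dvg eqxx (negPf ad) subr0.
set u := yc - _ *: e.
set v := yd - _ *: e.
have ue : dot u e = 0.
  by rewrite /u dotBl dotZl mulfVK ?subrr // gt_eqF.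
have ve : dot v e = 0.
  by rewrite /v dotBl dotZl mulfVK ?subrr // gt_eqF.
have uc : dot u (g c) = 1 by rewrite /u dotBl dotZl ec mulr0 subr0.
have ud : dot u (g d) = 0 by rewrite /u dotBl dotZl ed mulr0 subr0.
have vc : dot v (g c) = 0 by rewrite /v dotBl dotZl ec mulr0 subr0.
have vd : dot v (g d) = 1 by rewrite /v dotBl dotZl ed mulr0 subr0.
clearbody u v.
have orth : forall x, dot x e = 0 -> dot x (g c) = 0 -> dot x (g d) = 0 -> x = 0.
  move=> x xe xc xd.
  have hx : x = dot x (g b) *: e.
    rewrite {1}(rec1 nd x a) (sum4 _ uq) subrr scaler0 add0r xc xd !scale0r !addr0.
    by [].
  have : dot x (g b) * dot e e = 0 by rewrite -dotZl -hx.
  move/eqP; rewrite mulf_eq0 (gt_eqF ee) orbF => /eqP hb.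
  by rewrite hx hb scale0r.
set p := G c c; set q := G c d; set r := G d d.
set D := p * r - q ^+ 2.
have gcc : dot (g c) (g c) = p by [].
have gcd : dot (g c) (g d) = q by [].
have gdc : dot (g d) (g c) = q by rewrite dotC.
have gdd : dot (g d) (g d) = r by [].
have D0 : 0 < D by rewrite /D subr_gt0 /p /r /q; exact: G_cs.
have hu : D *: u = r *: g c - q *: g d.
  apply/eqP; rewrite -subr_eq0; apply/eqP; apply: orth.
  - by rewrite !(dotBl, dotZl) ue (dotC (g c)) (dotC (g d)) ec ed; ring.
  - rewrite !(dotBl, dotZl) uc ?gcc ?gcd ?gdc ?gdd /D; ring.
  - rewrite !(dotBl, dotZl) ud ?gcc ?gcd ?gdc ?gdd /D; ring.
have hv : D *: v = p *: g d - q *: g c.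
  apply/eqP; rewrite -subr_eq0; apply/eqP; apply: orth.
  - by rewrite !(dotBl, dotZl) ve (dotC (g c)) (dotC (g d)) ec ed; ring.
  - rewrite !(dotBl, dotZl) vc ?gcc ?gcd ?gdc ?gdd /D; ring.
  - rewrite !(dotBl, dotZl) vd ?gcc ?gcd ?gdc ?gdd /D; ring.
have uv : dot u v = - q / D.
  have h : D * D * dot u v = - q * D.
    rewrite -mulrA -dotZr -dotZl hu hv !(dotBl, dotBr, dotZl, dotZr) gcc gcd ?gcc ?gcd ?gdc ?gdd /D; ring.
  have DD : D != 0 by rewrite gt_eqF.
  have -> : dot u v = (D * D * dot u v) / (D * D) by field.
  by rewrite h; field.
have u0 : u != 0 by apply/eqP => h; move: uc; rewrite h dot0l => /eqP; rewrite eq_sym oner_eq0.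
have v0 : v != 0 by apply/eqP => h; move: vd; rewrite h dot0l => /eqP; rewrite eq_sym oner_eq0.
have nu : 0 < Num.sqrt (dot u u) by rewrite sqrtr_gt0 dotxx_gt0.
have nv : 0 < Num.sqrt (dot v v) by rewrite sqrtr_gt0 dotxx_gt0.
have nn := mulr_gt0 nu nv.
rewrite acos_gt_pihalf; last first.
  rewrite -ler_norml normrM normfV ler_pdivrMr ?normr_gt0 ?gt_eqF // mul1r.
  rewrite [X in _ <= X](ger0_norm (ltW nn)) -sqrtr_sqr -sqrtrM ?dotxx_ge0 //.
  by rewrite ler_sqrt ?cs // mulr_ge0 ?dotxx_ge0.
rewrite pmulr_llt0 ?invr_gt0 // uv pmulr_llt0 ?invr_gt0 //.
by rewrite oppr_lt0.
Qed.

End Obtuse.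


Section Comb.
Variables (R : realType) (G : 'I_4 -> 'I_4 -> R) (phi : 'I_4 -> R) (f : 'I_4)
  (nx : 'I_4 -> 'I_4).
Hypothesis Gs : forall i j, G i j = G j i.
Hypothesis Gn : forall i, ~ (forall j, j != i -> 0 < G i j).
Hypothesis Hnx : forall g, g != f ->
  [/\ nx g != g, 0 < G g (nx g) & phi (nx g) < phi g].

Definition hpath := exists x1 x2 x3 x4, uniq [:: x1; x2; x3; x4] /\
  0 < G x1 x2 /\ 0 < G x2 x3 /\ 0 < G x3 x4.

Lemma three_obt x a b c : uniq [:: x; a; b; c] ->
  0 < G x a -> 0 < G x b -> 0 < G x c -> False.
Proof.
move=> u ha hb hc; apply: (@Gn x) => j jx.
have := cover4 j u; rewrite !inE => /or4P [] /eqP E; subst j => //.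
by rewrite eqxx in jx.
Qed.

Lemma comb_c m c d : uniq [:: f; m; c; d] ->
  (forall i, i != f -> phi i <= phi m) -> nx m = c -> hpath.
Proof.
move=> u Hm Hc.
have [fm [fc [fd [mc [md cd]]]]] := uniq4P u.
have mf : m != f by rewrite eq_sym.
have cf : c != f by rewrite eq_sym.
have df : d != f by rewrite eq_sym.
have [_ Gmc _] := Hnx mf; rewrite Hc in Gmc.
have [ncc Gc phic] := Hnx cf.
have [ndd Gd phid] := Hnx df.
have := cover4 (nx c) u; rewrite !inE => /or4P [] /eqP E.
- have := cover4 (nx d) u; rewrite !inE => /or4P [] /eqP E'.
  + exists m, c, f, d; split; first by apply: uniq4I; do !split; rewrite // eq_sym.
    split; [exact: Gmc | split; [by rewrite -E | by rewrite Gs -E']].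
  + by move: phid; rewrite E' => /lt_le_trans /(_ (Hm d df)); rewrite ltxx.
  + exfalso; apply: (@three_obt c m f d).
    * by apply: uniq4I; do !split; rewrite // eq_sym.
    * by rewrite Gs.
    * by rewrite -E.
    * by rewrite Gs -E'.
  + by rewrite E' eqxx in ndd.
- by move: phic; rewrite E => /lt_le_trans /(_ (Hm c cf)); rewrite ltxx.
- by rewrite E eqxx in ncc.
- have := cover4 (nx d) u; rewrite !inE => /or4P [] /eqP E'.
  + exists m, c, d, f; split; first by apply: uniq4I; do !split; rewrite // eq_sym.
    split; [exact: Gmc | split; [by rewrite -E | by rewrite -E']].
  + by move: phid; rewrite E' => /lt_le_trans /(_ (Hm d df)); rewrite ltxx.
  + by move: phid; rewrite E' => /(lt_trans phic); rewrite E ltxx.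
  + by rewrite E' eqxx in ndd.
Qed.

Lemma comb : hpath.
Proof.
have [g0 hg0] := @ext4 [:: f] isT.
have g0f : g0 != f by move: hg0; rewrite inE.
case: (@arg_maxP _ _ 'I_4 g0 (fun i => i != f) phi g0f) => m mf Hm.
have [c hc] := @ext4 [:: f; m] isT.
have [d hd] := @ext4 [:: f; m; c] isT.
move: hc hd; rewrite !inE !negb_or => /andP[cf cm] /and3P[df dm dc].
have u : uniq [:: f; m; c; d].
  by apply: uniq4I; do !split; rewrite // eq_sym.
have u' : uniq [:: f; m; d; c].
  by apply: uniq4I; do !split; rewrite // eq_sym.
have Hm' : forall i, i != f -> phi i <= phi m by move=> i /Hm.
have cf' := cf. have df' := df.
have [nmm Gm phim] := Hnx mf.
have := cover4 (nx m) u; rewrite !inE => /or4P [] /eqP E.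
- have [ncc Gc phic] := Hnx cf'.
  have [ndd Gd phid] := Hnx df'.
  have := cover4 (nx c) u; rewrite !inE => /or4P [] /eqP Ec.
  + have := cover4 (nx d) u; rewrite !inE => /or4P [] /eqP Ed.
    * exfalso; apply: (@three_obt f m c d u).
      - by rewrite Gs -E.
      - by rewrite Gs -Ec.
      - by rewrite Gs -Ed.
    * by move: phid; rewrite Ed => /lt_le_trans /(_ (Hm' d df')); rewrite ltxx.
    * exists m, f, c, d; split; first by apply: uniq4I; do !split; rewrite // eq_sym.
      split; [by rewrite -E | split; [by rewrite Gs -Ec | by rewrite Gs -Ed]].
    * by rewrite Ed eqxx in ndd.
  + by move: phic; rewrite Ec => /lt_le_trans /(_ (Hm' c cf')); rewrite ltxx.
  + by rewrite Ec eqxx in ncc.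
  + have := cover4 (nx d) u; rewrite !inE => /or4P [] /eqP Ed.
    * exists m, f, d, c; split; first by apply: uniq4I; do !split; rewrite // eq_sym.
      split; [by rewrite -E | split; [by rewrite Gs -Ed | by rewrite Gs -Ec]].
    * by move: phid; rewrite Ed => /lt_le_trans /(_ (Hm' d df')); rewrite ltxx.
    * by move: phid; rewrite Ed => /(lt_trans phic); rewrite Ec ltxx.
    * by rewrite Ed eqxx in ndd.
- by rewrite E eqxx in nmm.
- exact: (@comb_c m c d u Hm' E).
- exact: (@comb_c m d c u' Hm' E).
Qed.

End Comb.


Section Final.
Variables (R : realType) (V : 'I_4 -> 'rV[R]_3).
Hypothesis nd : tetra_nondegenerate V.
Local Notation G := (G V).

Definition Ew (i : 'I_4) (w : 'I_4 -> R) := forall j, j != i -> w i * G i j < w j * G i i.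

Lemma Gn i : ~ (forall j, j != i -> 0 < G i j).
Proof.
move=> H; have := G_row V i; rewrite (bigD1 i) //=.
have : 0 <= \sum_(j | j != i) G i j.
  by apply: sumr_ge0 => j ji; exact: ltW (H j ji).
have := G_gt0 nd i; lra.
Qed.

Lemma hp_iff : has_obtuse_path V <-> hpath G.
Proof.
split.
- case=> a [b [c [d [u [o1 [o2 o3]]]]]].
  have [ab [ac [ad [bc [bd cd]]]]] := uniq4P u.
  have u2 : uniq [:: b; c; a; d] by apply: uniq4I; do !split; rewrite // eq_sym.
  have u3 : uniq [:: c; d; a; b] by apply: uniq4I; do !split; rewrite // eq_sym.
  rewrite (obtuseE nd u) in o1; rewrite (obtuseE nd u2) in o2; rewrite (obtuseE nd u3) in o3.
  exists c, d, a, b; split => //; split => //; split => //.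
  by rewrite G_sym.
- case=> x1 [x2 [x3 [x4 [u [h1 [h2 h3]]]]]].
  have [ab [ac [ad [bc [bd cd]]]]] := uniq4P u.
  have u2 : uniq [:: x3; x4; x1; x2] by apply: uniq4I; do !split; rewrite // eq_sym.
  have u3 : uniq [:: x4; x1; x3; x2] by apply: uniq4I; do !split; rewrite // eq_sym.
  exists x3, x4, x1, x2; split => //.
  rewrite (obtuseE nd u2) (obtuseE nd u3) (obtuseE nd u) (G_sym V x3).
  by [].
Qed.

Lemma Ew_scale i (w : 'I_4 -> R) (W : R) : 0 < W ->
  Ew i (fun k => w k / W) <-> Ew i w.
Proof.
move=> W0; split => H j ji.
- by have := H j ji; rewrite !(mulrAC _ W^-1) ltr_pM2r ?invr_gt0.
- by rewrite !(mulrAC _ W^-1) ltr_pM2r ?invr_gt0 // H.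
Qed.

Lemma construct (f : 'I_4) (w : 'I_4 -> R) : (forall i, 0 < w i) -> Ew f w ->
  (forall g, g != f -> exists j, j != g /\ w j * G g g <= w g * G g j) ->
  exists O, in_interior V O /\ monostable_on V O f.
Proof.
move=> wp Ef nE.
set W := \sum_i w i.
have W0 : 0 < W.
  rewrite /W (bigD1 f) //=; apply: (lt_le_trans (wp f)).
  by rewrite lerDl sumr_ge0 // => i _; exact: ltW.
set w' := fun k => w k / W.
have w'p : forall i, 0 < w' i by move=> i; rewrite divr_gt0.
have sw' : \sum_i w' i = 1 by rewrite /w' -mulr_suml mulfV ?gt_eqF.
exists (\sum_i w' i *: V i); split; first by exists w'.
move=> g; rewrite (equilE nd w'p sw' erefl) -/(Ew g w') (Ew_scale _ _ W0).
split.
- move=> Eg; apply/eqP; apply/negPn/negP => gf.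
  have [j [jg hj]] := nE g gf.
  by have := Eg j jg; rewrite ltNge hj.
- by move=> ->.
Qed.

Definition Tk (i j : 'I_4) : R := `|G i j| / G i i + G i i / `|G i j|.
Definition Ssum : R := \sum_i \sum_j Tk i j.
Definition K : R := 1 + Ssum.

Lemma Tk_ge0 i j : 0 <= Tk i j.
Proof.
have := G_gt0 nd i => Gi.
by rewrite /Tk addr_ge0 // divr_ge0 // ltW.
Qed.

Lemma le_sum_one (F : 'I_4 -> R) i : (forall k, 0 <= F k) -> F i <= \sum_k F k.
Proof.
move=> H; rewrite (bigD1 i) //= lerDl sumr_ge0 // => k _; exact: H.
Qed.

Lemma Tk_le i j : Tk i j <= Ssum.
Proof.
have h1 : Tk i j <= \sum_l Tk i l by apply: le_sum_one => k; exact: Tk_ge0.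
have h2 : \sum_l Tk i l <= Ssum.
  rewrite /Ssum; apply: (@le_sum_one (fun k => \sum_l Tk k l) i) => k.
  by apply: sumr_ge0 => l _; exact: Tk_ge0.
exact: le_trans h1 h2.
Qed.

Lemma S_ge0 : 0 <= Ssum.
Proof. exact: le_trans (Tk_ge0 ord0 ord0) (Tk_le ord0 ord0). Qed.

Lemma K_ge1 : 1 <= K.
Proof. by rewrite /K lerDl S_ge0. Qed.

Lemma K_gt0 : 0 < K.
Proof. exact: lt_le_trans ltr01 K_ge1. Qed.

Lemma KA i j : G i j < K * G i i.
Proof.
have Gi := G_gt0 nd i.
have h : `|G i j| / G i i <= Ssum.
  apply: le_trans (Tk_le i j); rewrite /Tk lerDl divr_ge0 // ltW //.
rewrite ler_pdivrMr // in h.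
have := ler_norm (G i j); rewrite /K; nra.
Qed.

Lemma KB i j : 0 < G i j -> G i i <= K * G i j.
Proof.
move=> Gij; have Gi := G_gt0 nd i.
have h : G i i / `|G i j| <= Ssum.
  apply: le_trans (Tk_le i j); rewrite /Tk lerDr divr_ge0 // ltW //.
rewrite gtr0_norm // ler_pdivrMr // in h.
rewrite /K; nra.
Qed.

Lemma Estep i j (m : R) : 1 <= m -> 1 * G i j < (K * m) * G i i.
Proof.
move=> m1; have Gi := G_gt0 nd i; have := KA i j; rewrite mul1r => h.
have : 0 <= K * G i i * (m - 1) by rewrite !mulr_ge0 ?subr_ge0 // ltW // K_gt0.
nra.
Qed.

Lemma Nstep g j (c : R) : 0 < G g j -> 0 < c -> c * G g g <= (K * c) * G g j.
Proof.
move=> Ggj c0; have := KB Ggj; nra.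
Qed.

End Final.


Section Final2.
Variables (R : realType) (V : 'I_4 -> 'rV[R]_3).
Hypothesis nd : tetra_nondegenerate V.
Local Notation G := (G V).
Local Notation K := (K V).

Lemma pos_ifs (x1 x2 x3 : 'I_4) (a b c d : R) : 0 < a -> 0 < b -> 0 < c -> 0 < d ->
  forall i, 0 < (if i == x1 then a else if i == x2 then b else if i == x3 then c else d).
Proof. by move=> ha hb hc hd i; do !case: ifP => _. Qed.

Lemma s1 x1 x2 x3 x4 : uniq [:: x1; x2; x3; x4] ->
  0 < G x1 x2 -> 0 < G x2 x3 -> 0 < G x3 x4 ->
  exists O, in_interior V O /\ monostable_on V O x1.
Proof.
move=> u h1 h2 h3.
have [a12 [a13 [a14 [a23 [a24 a34]]]]] := uniq4P u.
have b21 : (x2 == x1) = false by rewrite eq_sym (negPf a12).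
have b31 : (x3 == x1) = false by rewrite eq_sym (negPf a13).
have b41 : (x4 == x1) = false by rewrite eq_sym (negPf a14).
have b32 : (x3 == x2) = false by rewrite eq_sym (negPf a23).
have b42 : (x4 == x2) = false by rewrite eq_sym (negPf a24).
have b43 : (x4 == x3) = false by rewrite eq_sym (negPf a34).
have K0 := K_gt0 nd; have K1 := K_ge1 nd.
set w := fun i => if i == x1 then 1 else if i == x2 then K * 1
  else if i == x3 then K * (K * 1) else K * (K * (K * 1)).
have w1 : w x1 = 1 by rewrite /w eqxx.
have w2 : w x2 = K * 1 by rewrite /w b21 eqxx.
have w3 : w x3 = K * (K * 1) by rewrite /w b31 b32 eqxx.
have w4 : w x4 = K * (K * (K * 1)) by rewrite /w b41 b42 b43.
have KK : 1 <= K * 1 by rewrite mulr1.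
have KKK : 1 <= K * (K * 1) by rewrite mulr1; nra.
apply: (@construct _ _ nd x1 w).
- by apply: pos_ifs; rewrite ?ltr01 ?mulr_gt0 // ltr01.
- move=> j j1; have := cover4 j u; rewrite !inE => /or4P [] /eqP E; subst j.
  + by rewrite eqxx in j1.
  + by rewrite w1 w2 Estep.
  + by rewrite w1 w3 Estep.
  + by rewrite w1 w4 Estep.
- move=> g g1; have := cover4 g u; rewrite !inE => /or4P [] /eqP E; subst g.
  + by rewrite eqxx in g1.
  + exists x1; split; first by [|rewrite eq_sym].
    by rewrite w1 w2; apply: (Nstep nd) => //; rewrite ?ltr01 // G_sym.
  + exists x2; split; first by [|rewrite eq_sym].
    by rewrite w2 w3; apply: (Nstep nd) => //; rewrite ?mulr_gt0 ?ltr01 // G_sym.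
  + exists x3; split; first by [|rewrite eq_sym].
    by rewrite w3 w4; apply: (Nstep nd) => //; rewrite ?mulr_gt0 ?ltr01 // G_sym.
Qed.

Lemma s2 x1 x2 x3 x4 : uniq [:: x1; x2; x3; x4] ->
  0 < G x1 x2 -> 0 < G x2 x3 -> 0 < G x3 x4 ->
  exists O, in_interior V O /\ monostable_on V O x2.
Proof.
move=> u h1 h2 h3.
have [a12 [a13 [a14 [a23 [a24 a34]]]]] := uniq4P u.
have b21 : (x2 == x1) = false by rewrite eq_sym (negPf a12).
have b31 : (x3 == x1) = false by rewrite eq_sym (negPf a13).
have b41 : (x4 == x1) = false by rewrite eq_sym (negPf a14).
have b32 : (x3 == x2) = false by rewrite eq_sym (negPf a23).
have b42 : (x4 == x2) = false by rewrite eq_sym (negPf a24).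
have b43 : (x4 == x3) = false by rewrite eq_sym (negPf a34).
have K0 := K_gt0 nd; have K1 := K_ge1 nd.
set w := fun i => if i == x1 then K * 1 else if i == x2 then 1
  else if i == x3 then K * 1 else K * (K * 1).
have w1 : w x1 = K * 1 by rewrite /w eqxx.
have w2 : w x2 = 1 by rewrite /w b21 eqxx.
have w3 : w x3 = K * 1 by rewrite /w b31 b32 eqxx.
have w4 : w x4 = K * (K * 1) by rewrite /w b41 b42 b43.
have KK : 1 <= K * 1 by rewrite mulr1.
have m1 : (1 : R) <= 1 by [].
apply: (@construct _ _ nd x2 w).
- by apply: pos_ifs; rewrite ?ltr01 ?mulr_gt0 // ltr01.
- move=> j j2; have := cover4 j u; rewrite !inE => /or4P [] /eqP E; subst j.
  + by rewrite w2 w1 Estep.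
  + by rewrite eqxx in j2.
  + by rewrite w2 w3 Estep.
  + by rewrite w2 w4 Estep.
- move=> g g2; have := cover4 g u; rewrite !inE => /or4P [] /eqP E; subst g.
  + exists x2; split; first by [|rewrite eq_sym].
    by rewrite w1 w2; apply: (Nstep nd) => //; rewrite ltr01.
  + by rewrite eqxx in g2.
  + exists x2; split; first by [|rewrite eq_sym].
    by rewrite w2 w3; apply: (Nstep nd) => //; rewrite ?ltr01 // G_sym.
  + exists x3; split; first by [|rewrite eq_sym].
    by rewrite w3 w4; apply: (Nstep nd) => //; rewrite ?mulr_gt0 ?ltr01 // G_sym.
Qed.

Lemma suff : hpath G -> forall f, exists O, in_interior V O /\ monostable_on V O f.
Proof.
case=> x1 [x2 [x3 [x4 [u [h1 [h2 h3]]]]]] f.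
have [a12 [a13 [a14 [a23 [a24 a34]]]]] := uniq4P u.
have ur : uniq [:: x4; x3; x2; x1] by apply: uniq4I; do !split; rewrite // eq_sym.
have h1' : 0 < G x4 x3 by rewrite G_sym.
have h2' : 0 < G x3 x2 by rewrite G_sym.
have h3' : 0 < G x2 x1 by rewrite G_sym.
have := cover4 f u; rewrite !inE => /or4P [] /eqP ->.
- exact: s1 u h1 h2 h3.
- exact: s2 u h1 h2 h3.
- exact: s2 ur h1' h2' h3'.
- exact: s1 ur h1' h2' h3'.
Qed.

Lemma nec : (exists O, in_interior V O /\ monostable V O) -> hpath G.
Proof.
case=> O [[w [wp [sw hO]]] [f Hf]].
have EQ := equilE nd wp sw hO.
have nE : forall g, g != f -> ~ Ew V g w.
  move=> g gf /EQ /Hf E; by rewrite E eqxx in gf.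
have ex : forall g, g != f -> [exists j, (j != g) && (w j * G g g <= w g * G g j)].
  move=> g gf; case/boolP: [exists j, (j != g) && (w j * G g g <= w g * G g j)] => // /existsPn H.
  exfalso; apply: (nE g gf) => j jg.
  by have := H j; rewrite jg /= -ltNge.
pose nx g := odflt g [pick j | (j != g) && (w j * G g g <= w g * G g j)].
have Hnx : forall g, g != f -> (nx g != g) && (w (nx g) * G g g <= w g * G g (nx g)).
  move=> g gf; rewrite /nx; case: pickP => [j hj | H] //=.
  by have /existsP [j hj] := ex g gf; rewrite H in hj.
pose phi i := w i ^+ 2 / G i i.
apply: (@comb R G phi f nx).
- exact: G_sym.
- exact: Gn.
- move=> g gf; have /andP[jg hle] := Hnx g gf.
  move: jg hle; set j := nx g => jg hle.
  have Gg := G_gt0 nd g; have Gj := G_gt0 nd j.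
  have wg := wp g; have wj := wp j.
  have Gpos : 0 < G g j.
    have : 0 < w j * G g g by rewrite mulr_gt0.
    by move/lt_le_trans/(_ hle); rewrite pmulr_rgt0.
  split => //.
  have cs := G_cs nd jg; rewrite (G_sym V j g) in cs.
  have e1 : (w j * G g g) * (w j * G g g) <= (w g * G g j) * (w g * G g j).
    by apply: ler_pM => //; rewrite ?mulr_ge0 // ltW.
  have e2 : (w g * G g j) * (w g * G g j) < (w g * w g) * (G g g * G j j).
    have -> : (w g * G g j) * (w g * G g j) = (w g * w g) * (G g j ^+ 2) by ring.
    by rewrite ltr_pM2l ?mulr_gt0 // mulrC.
  have e3 := le_lt_trans e1 e2.
  rewrite /phi ltr_pdivrMr // mulrAC ltr_pdivlMr //.
  rewrite -(ltr_pM2r Gg).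
  have -> : w j ^+ 2 * G g g * G g g = (w j * G g g) * (w j * G g g) by ring.
  have -> : w g ^+ 2 * G j j * G g g = (w g * w g) * (G g g * G j j) by ring.
  exact: e3.
Qed.

End Final2.

Theorem theorem1p3 (R : realType) (V : 'I_4 -> 'rV[R]_3) :
  tetra_nondegenerate V ->
  (has_obtuse_path V <-> exists O, in_interior V O /\ monostable V O) /\
  ((exists O, in_interior V O /\ monostable V O) <->
   (forall f : 'I_4, exists O, in_interior V O /\ monostable_on V O f)).
Proof.
move=> nd.
have A : has_obtuse_path V -> forall f, exists O, in_interior V O /\ monostable_on V O f.
  by move/(hp_iff nd); exact: suff.
have B : (exists O, in_interior V O /\ monostable V O) -> has_obtuse_path V.
  by move/(nec nd); move/(hp_iff nd).
split; split.
- move=> h; have [O [h1 h2]] := A h ord0; exists O; split => //; by exists ord0.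
- exact: B.
- by move=> h f; exact: A (B h) f.
- move=> h; have [O [h1 h2]] := h ord0; exists O; split => //; by exists ord0.
Qed.
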